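(* Let $m\ge1$, let $\mathcal{X},\mathcal{A}_1,\dots,\mathcal{A}_m$ be finite sets with $|\mathcal{X}|=d\ge2$, and let $P$ be a probability distribution on $\mathcal{X}\times\mathcal{A}_1\times\cdots\times\mathcal{A}_m$ such that $\omega_{\mathrm{c}}<\omega_{\mathrm{ns}}$. Then there is a no-signalling correlation $Q$ which is a vertex of the no-signalling polytope, which attains $\omega_{\mathrm{ns}}$, and for which there exist $x\in\mathcal{X}$ and $a_1\in\mathcal{A}_1,\dots,a_m\in\mathcal{A}_m$ with $Q(x,\dots,x|a_1,\dots,a_m)>1/d$.
   Context: $\delta$ is the indicator function. An $m$-partite no-signalling correlation is a conditional distribution $Q(x_1,\dots,x_m|a_1,\dots,a_m)$ on $\mathcal{X}^m$ given $(a_1,\dots,a_m)\in\mathcal{A}_1\times\cdots\times\mathcal{A}_m$ such that for every index set $I\subset\{1,\dots,m\}$ with complement $J$, $\sum_{x_J}Q(x_I,x_J|a_I,a_J)$ does not depend on $a_J$; the set of all such $Q$ is a convex polytope (the no-signalling polytope). $\omega_{\mathrm{ns}}=\max_Q\sum_{x,a_1,\dots,a_m}P(x,a_1,\dots,a_m)Q(x,\dots,x|a_1,\dots,a_m)$ over no-signalling $Q$, and $\omega_{\mathrm{c}}=\max_{f_1,\dots,f_m}\sum P(x,a_1,\dots,a_m)\delta[f_1(a_1)=\cdots=f_m(a_m)=x]$ over functions $f_i\colon\mathcal{A}_i\to\mathcal{X}$. *)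

(* Defs.v *)
From HB Require Import structures.
From mathcomp Require Import all_boot all_order all_algebra.
From mathcomp Require Import reals.
Set Implicit Arguments. Unset Strict Implicit. Unset Printing Implicit Defensive.
Import Order.TTheory GRing.Theory Num.Theory.
Local Open Scope ring_scope.

(* m parties, question sets A i (i : 'I_m), common answer set X. *)
Section NS.
Variables (R : realType) (m : nat) (X : finType) (A : 'I_m -> finType).

Definition inputs := {dffun forall i : 'I_m, A i}.
Definition outputs := {ffun 'I_m -> X}.
Definition corr := outputs -> inputs -> R.

Definition marginal (Q : corr) (I : {set 'I_m}) (x : outputs) (a : inputs) : R :=
  \sum_(y : outputs | [forall i in I, y i == x i]) Q y a.

Definition no_signalling (Q : corr) : Prop :=
  (forall x a, 0 <= Q x a) /\
  (forall a, \sum_(x : outputs) Q x a = 1) /\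
  (forall (I : {set 'I_m}) (x : outputs) (a a' : inputs),
      [forall i in I, a i == a' i] -> marginal Q I x a = marginal Q I x a').

Definition ns_vertex (Q : corr) : Prop :=
  no_signalling Q /\
  forall (Q1 Q2 : corr) (t : R), no_signalling Q1 -> no_signalling Q2 ->
    0 < t < 1 -> (forall x a, Q x a = t * Q1 x a + (1 - t) * Q2 x a) ->
    (forall x a, Q1 x a = Q x a) /\ (forall x a, Q2 x a = Q x a).

Definition is_distr (P : X -> inputs -> R) : Prop :=
  (forall x a, 0 <= P x a) /\ \sum_(x : X) \sum_(a : inputs) P x a = 1.

Definition diag (x : X) : outputs := [ffun=> x].

Definition game_value (P : X -> inputs -> R) (Q : corr) : R :=
  \sum_(x : X) \sum_(a : inputs) P x a * Q (diag x) a.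

Definition strategies := {dffun forall i : 'I_m, {ffun A i -> X}}.

Definition classical_value (P : X -> inputs -> R) (f : strategies) : R :=
  \sum_(x : X) \sum_(a : inputs)
     P x a * (if [forall i, f i (a i) == x] then 1 else 0).

Definition omega_c (P : X -> inputs -> R) : R :=
  \big[Num.max/0]_(f : strategies) classical_value P f.

Definition attains_omega_ns (P : X -> inputs -> R) (Q : corr) : Prop :=
  no_signalling Q /\ forall Q', no_signalling Q' -> game_value P Q' <= game_value P Q.

(* omega_c < omega_ns (omega_ns is a maximum over the compact NS polytope) *)
Definition omega_c_lt_omega_ns (P : X -> inputs -> R) : Prop :=
  exists Q', no_signalling Q' /\ omega_c P < game_value P Q'.

End NS.

(* Main.v *)
Require Import Defs.
From HB Require Import structures.
From mathcomp Require Import all_boot all_order all_algebra.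
From mathcomp Require Import reals.
From mathcomp Require Import ring lra.
From Stdlib Require Import Classical.
Import Order.TTheory GRing.Theory Num.Theory.
Local Open Scope ring_scope.

Section Proof.
Set Implicit Arguments.
Variables (R : realType) (m : nat) (X : finType) (A : 'I_m -> finType).

Lemma ex_min (T : finType) (P : pred T) (f : T -> R) :
  (exists k, P k) -> exists k, P k /\ forall k', P k' -> f k <= f k'.
Proof.
suff H : forall s : seq T, (exists k, k \in s /\ P k) ->
  exists k, P k /\ forall k', k' \in s -> P k' -> f k <= f k'.
  move=> [k Pk]; have [|k0 [P0 H0]] := H (enum T).
    by exists k; rewrite mem_enum.
  by exists k0; split => // k' Pk'; apply: H0; rewrite ?mem_enum.
elim=> [|y s IH]; first by move=> [k []].
move=> [k [ks Pk]].
have [[k1 [k1s Pk1]]|hn] := classic (exists k, k \in s /\ P k).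
  have [k0 [P0 H0]] := IH (ex_intro _ k1 (conj k1s Pk1)).
  case Py: (P y).
    have [le|lt] := leP (f k0) (f y).
      exists k0; split => // k'; rewrite in_cons => /orP [/eqP -> //|]; exact: H0.
    exists y; split => // k'; rewrite in_cons => /orP [/eqP -> //|k's Pk'].
    by apply: le_trans (ltW lt) (H0 _ k's Pk').
  exists k0; split => // k'; rewrite in_cons => /orP [/eqP ->|]; first by rewrite Py.
  exact: H0.
have Py : P y.
  move: ks; rewrite in_cons => /orP [/eqP <- //|ks]; exfalso; apply: hn; by exists k.
exists y; split => // k'; rewrite in_cons => /orP [/eqP -> //|k's Pk'].
by exfalso; apply: hn; exists k'.
Qed.

Local Notation corr := (corr R X A).
Local Notation outputs := (outputs m X).
Local Notation inputs := (inputs A).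

Definition hom (D : corr) : Prop :=
  (forall a, \sum_(x : outputs) D x a = 0) /\
  (forall (I : {set 'I_m}) (x : outputs) (a a' : inputs),
      [forall i in I, a i == a' i] -> marginal D I x a = marginal D I x a').

Definition kfree (Q : corr) := forall D, hom D ->
  (forall x a, Q x a = 0 -> D x a = 0) -> forall x a, D x a = 0.

Definition supp (Q : corr) : {set outputs * inputs} := [set k | Q k.1 k.2 != 0].

Definition lin (Q D : corr) (t : R) : corr := fun x a => Q x a + t * D x a.

Lemma marginal_lin Q D t I x a :
  marginal (lin Q D t) I x a = marginal Q I x a + t * marginal D I x a.
Proof. by rewrite /marginal /lin big_split /= mulr_sumr. Qed.

Lemma lin_ns Q D t : no_signalling Q -> hom D ->
  (forall x a, 0 <= lin Q D t x a) -> no_signalling (lin Q D t).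
Proof.
move=> [_ [hs hm]] [ds dm] h0; split => //; split.
  by move=> a; rewrite /lin big_split /= -mulr_sumr hs ds mulr0 addr0.
by move=> I x a a' h; rewrite !marginal_lin (hm _ _ _ _ h) (dm _ _ _ _ h).
Qed.

Lemma hom_opp D : hom D -> hom (fun x a => - D x a).
Proof.
move=> [ds dm]; split; first by move=> a; rewrite sumrN ds oppr0.
by move=> I x a a' h; rewrite /marginal !sumrN; congr (- _); exact: dm.
Qed.

Lemma hom_sub Q1 Q : no_signalling Q1 -> no_signalling Q -> hom (fun x a => Q1 x a - Q x a).
Proof.
move=> [_ [s1 m1]] [_ [s m2]]; split; first by move=> a; rewrite sumrB s1 s subrr.
move=> I x a a' h; rewrite /marginal !sumrB.
by have := m1 I x a a' h; have := m2 I x a a' h; rewrite /marginal => -> ->.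
Qed.

Lemma value_lin (P : X -> inputs -> R) Q D t :
  game_value P (lin Q D t) = game_value P Q + t * game_value P D.
Proof.
rewrite /game_value mulr_sumr -big_split; apply: eq_bigr => x _ /=.
rewrite mulr_sumr -big_split; apply: eq_bigr => a _ /=; rewrite /lin; ring.
Qed.

Lemma value_ext (P : X -> inputs -> R) Q1 Q2 :
  (forall x a, Q1 x a = Q2 x a) -> game_value P Q1 = game_value P Q2.
Proof.
by move=> h; rewrite /game_value; apply: eq_bigr => x _; apply: eq_bigr => a _; rewrite h.
Qed.

Lemma kfree_vertex Q : no_signalling Q -> kfree Q -> ns_vertex Q.
Proof.
move=> hQ hk; split => // Q1 Q2 t h1 h2 /andP [t0 t1] hc.
have e1 : forall x a, Q1 x a = Q x a.
  have := hk _ (@hom_sub Q1 Q h1 hQ) => H x a; apply/eqP; rewrite -subr_eq0; apply/eqP.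
  apply: H => x' a' hz.
  have := hc x' a'; rewrite hz => hz'.
  have p1 := h1.1 x' a'; have p2 := h2.1 x' a'.
  have : t * Q1 x' a' = 0.
    have : 0 <= t * Q1 x' a' by rewrite mulr_ge0 // ltW.
    have : 0 <= (1 - t) * Q2 x' a' by rewrite mulr_ge0 // subr_ge0 ltW.
    lra.
  move/eqP; rewrite mulf_eq0 gt_eqF //= => /eqP ->; by rewrite subr0.
split => // x a; have := hc x a; rewrite e1 => hxa.
have : (1 - t) * (Q2 x a - Q x a) = 0 by rewrite mulrBr; lra.
move/eqP; rewrite mulf_eq0 => /orP [|]; first by rewrite subr_eq0 => /eqP ht; lra.
by rewrite subr_eq0 => /eqP.
Qed.

Lemma vertex_unique V W : no_signalling V -> no_signalling W -> kfree V ->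
  supp V = supp W -> forall x a, W x a = V x a.
Proof.
move=> hV hW hk hs x a; apply/eqP; rewrite -subr_eq0; apply/eqP.
apply: (hk _ (@hom_sub W V hW hV)) => x' a' hz.
have : (x', a') \notin supp W by rewrite -hs inE /= hz eqxx.
by rewrite inE /= negbK => /eqP ->; rewrite hz subrr.
Qed.

Lemma step_dir (P : X -> inputs -> R) Q D x0 a0 : no_signalling Q -> hom D ->
  (forall x a, Q x a = 0 -> D x a = 0) -> D x0 a0 != 0 -> 0 <= game_value P D ->
  exists Q', no_signalling Q' /\ (#|supp Q'| < #|supp Q|)%N /\
    game_value P Q <= game_value P Q'.
Proof.
move=> hQ hD hs hne hv.
have hneg : exists k : outputs * inputs, D k.1 k.2 < 0.
  case: (ltrgtP (D x0 a0) 0) => [lt|gt|eq]; last by rewrite eq eqxx in hne.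
    by exists (x0, a0).
  apply: NNPP => hn.
  have : 0 < \sum_(x : outputs) D x a0.
    rewrite (bigD1 x0) //=; apply: ltr_wpDr => //; apply: sumr_ge0 => x _.
    by rewrite leNgt; apply/negP => h; apply: hn; exists (x, a0).
  by rewrite hD.1 ltxx.
have [k [kneg kmin]] := @ex_min _ (fun k : outputs * inputs => D k.1 k.2 < 0) (fun k => Q k.1 k.2 / - D k.1 k.2) hneg.
set t := Q k.1 k.2 / - D k.1 k.2 in kmin.
have t0 : 0 <= t by rewrite divr_ge0 ?hQ.1 // oppr_ge0 ltW.
have hpos : forall x a, 0 <= lin Q D t x a.
  move=> x a; rewrite /lin; case: (ltP (D x a) 0) => h.
    have := kmin (x, a) h; rewrite /= ler_pdivlMr ?oppr_gt0 //; lra.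
  by rewrite addr_ge0 ?hQ.1 // mulr_ge0.
exists (lin Q D t); split; first exact: lin_ns.
split; last by rewrite value_lin lerDl mulr_ge0.
apply: proper_card; apply/properP; split.
  apply/subsetP => [[x a]]; rewrite !inE /= /lin; apply: contraNN => /eqP h.
  by rewrite h (hs _ _ h) mulr0 addr0.
exists k; rewrite !inE /lin.
  by apply/negP => /eqP h; move: (hs _ _ h) kneg => ->; rewrite ltxx.
rewrite /t; apply/negPn/eqP; field.
exact: ltr0_neq0.
Qed.

Lemma step (P : X -> inputs -> R) Q : no_signalling Q -> ~ kfree Q ->
  exists Q', no_signalling Q' /\ (#|supp Q'| < #|supp Q|)%N /\
    game_value P Q <= game_value P Q'.
Proof.
move=> hQ hk.
have [D [hD [hs [x0 [a0 hne]]]]] : exists D, hom D /\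
    (forall x a, Q x a = 0 -> D x a = 0) /\ exists x a, D x a != 0.
  apply: NNPP => H; apply: hk => D hD hs x a; apply: NNPP => hne; apply: H.
  by exists D; split => //; split => //; exists x, a; apply/eqP.
case: (leP 0 (game_value P D)) => hv; first exact: (step_dir P x0 a0 hQ hD hs hne hv).
apply: (step_dir P x0 a0 hQ (hom_opp hD)).
- by move=> x a h; rewrite (hs _ _ h) oppr0.
- by rewrite oppr_eq0.
have -> : game_value P (fun x a => - D x a) = - game_value P D.
  rewrite /game_value -sumrN; apply: eq_bigr => x _; rewrite -sumrN.
  by apply: eq_bigr => a _; rewrite mulrN.
by rewrite oppr_ge0 ltW.
Qed.

Lemma reduce (P : X -> inputs -> R) n : forall Q, no_signalling Q ->
  (#|supp Q| <= n)%N ->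
  exists V, no_signalling V /\ kfree V /\ game_value P Q <= game_value P V.
Proof.
elim: n => [|n IH] Q hQ hn.
  have [hk|hk] := classic (kfree Q); first by exists Q.
  have [Q' [_ [lt _]]] := step P hQ hk; by move: (leq_trans lt hn).
have [hk|hk] := classic (kfree Q); first by exists Q.
have [Q' [h' [lt le]]] := step P hQ hk.
have [V [hV [kV lV]]] := IH Q' h' (leq_trans lt hn).
by exists V; split => //; split => //; apply: le_trans le lV.
Qed.

Lemma best_vertex (P : X -> inputs -> R) (s : seq {set outputs * inputs}) :
  (exists V, no_signalling V /\ kfree V /\ supp V \in s) ->
  exists V, no_signalling V /\ kfree V /\ forall W, no_signalling W -> kfree W ->
    supp W \in s -> game_value P W <= game_value P V.
Proof.
elim: s => [|S s IH]; first by move=> [V [_ [_]]].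
move=> [V [hV [kV sV]]].
have [hs|hs] := classic (exists V, no_signalling V /\ kfree V /\ supp V \in s).
  have [V' [hV' [kV' bV']]] := IH hs.
  have [[VS [hVS [kVS eS]]]|hn] :=
      classic (exists V, no_signalling V /\ kfree V /\ supp V = S).
    have [le|lt] := leP (game_value P VS) (game_value P V').
      exists V'; split => //; split => // W hW kW; rewrite in_cons => /orP [/eqP eW|]; last exact: bV'.
      rewrite (value_ext P _ _ (vertex_unique hVS hW kVS _)) //; by rewrite eS eW.
    exists VS; split => //; split => // W hW kW; rewrite in_cons => /orP [/eqP eW|Ws].
      by rewrite (value_ext P _ _ (vertex_unique hVS hW kVS _)) // eS eW.
    by apply: le_trans (ltW lt); apply: bV'.
  exists V'; split => //; split => // W hW kW; rewrite in_cons => /orP [/eqP eW|]; last exact: bV'.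
  by exfalso; apply: hn; exists W.
exists V; split => //; split => // W hW kW; rewrite in_cons => /orP [/eqP eW|Ws].
  move: sV; rewrite in_cons => /orP [/eqP eV|Vs]; last by exfalso; apply: hs; exists V.
  by rewrite (value_ext P _ _ (vertex_unique hV hW kV _)) // eV eW.
by exfalso; apply: hs; exists W.
Qed.

End Proof.

Theorem mainTheorem10 (R : realType) (m : nat) (X : finType)
  (A : 'I_m -> finType) (P : X -> inputs A -> R) :
  (1 <= m)%N -> (2 <= #|X|)%N -> is_distr P -> omega_c_lt_omega_ns P ->
  exists Q : corr R X A,
    no_signalling Q /\ ns_vertex Q /\ attains_omega_ns P Q /\
    exists (x : X) (a : inputs A), Q (diag m x) a > (#|X|%:R)^-1.
Proof.
move=> m1 d2 [P0 P1] [Q' [hQ' lt']].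
have [V0 [hV0 [kV0 lV0]]] := reduce P _ hQ' (leqnn _).
have [V [hV [kV bV]]] : exists V, no_signalling V /\ kfree V /\
    forall W, no_signalling W -> kfree W ->
    supp W \in enum {set outputs m X * inputs A} -> game_value P W <= game_value P V.
  by apply: best_vertex; exists V0; rewrite mem_enum.
have att : forall Q'', no_signalling Q'' -> game_value P Q'' <= game_value P V.
  move=> Q'' h''; have [W [hW [kW lW]]] := reduce P _ h'' (leqnn _).
  by apply: le_trans lW _; apply: bV; rewrite ?mem_enum.
exists V; split => //; split; first exact: kfree_vertex.
split; first by split.
set d := (#|X|%:R : R).
have dpos : 0 < d by rewrite /d ltr0n; apply: leq_trans d2.
have [x0 hx0] : exists x, d^-1 <= \sum_(a : inputs A) P x a.
  apply: NNPP => hn.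
  have : \sum_(x : X) \sum_(a : inputs A) P x a < \sum_(x : X) d^-1.
    have [y _] : exists y : X, y \in X by apply/card_gt0P; apply: leq_trans d2.
    apply: ltr_sum; first by apply/hasP; exists y => //; exact: mem_index_enum.
    move=> x _; rewrite ltNge; apply/negP => h; apply: hn; by exists x.
  rewrite P1 sumr_const -mulr_natr mulVf ?ltxx //; exact: lt0r_neq0.
have hc : d^-1 <= omega_c P.
  set f : strategies X A := [ffun i => [ffun _ => x0]].
  apply: le_trans (le_bigmax _ _ f); apply: le_trans hx0 _.
  rewrite /classical_value (bigD1 x0) //=; apply: ler_wpDr.
    apply: sumr_ge0 => x _; apply: sumr_ge0 => a _; apply: mulr_ge0 => //.
    by case: ifP.
  apply: ler_sum => a _.
  have -> : [forall i, f i (a i) == x0] by apply/forallP => i; rewrite /f !ffunE.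
  by rewrite mulr1.
apply: NNPP => hn.
have hle : game_value P V <= d^-1.
  rewrite -(mul1r d^-1) -P1 mulr_suml; apply: ler_sum => x _; rewrite mulr_suml.
  apply: ler_sum => a _; apply: ler_wpM2l => //.
  by rewrite leNgt; apply/negP => h; apply: hn; exists x, a.
have := att _ hQ'; lra.
Qed.
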